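(* Let $V=\{a_1,\ldots,a_n\}$ be a set of propositional variables, $\mathcal{R}$ be a set of transition rules on $V$, $F$ be a CTL formula and let $s \models_{\mathcal{R}} F$ denote that $F$ holds at state $s$ in the transition system defined by $\mathcal{R}$. Then $s \models_{\mathcal{R}} F$ iff the sequent $\vdash \llbracket s\rrbracket, [\![F]\!]_{\mathcal{R}}$ is provable in $\mu$MALL.
   Context: $\mu$MALL is multiplicative-additive linear logic extended with least ($\mu$) and greatest ($\nu$) fixed points, with the unfolding rule for $\mu$ and the (co)induction rule for $\nu$ using an invariant. Below $\&$ is additive conjunction (with), $\bigoplus$/$\oplus$ additive disjunction, $\otimes$ multiplicative conjunction, and ⅋ multiplicative disjunction (par). A state $s$ over $V$ is a valuation $V\to\{\mathrm{true},\mathrm{false}\}$, written as a conjunction $p_1(a_1)\wedge\cdots\wedge p_n(a_n)$ with each $p_i$ either ''present'' ($s(a_i)=\mathrm{true}$) or ''absent'' ($s(a_i)=\mathrm{false}$). Transition rules have the form $r: s\to s'$, enabling the transition from $s$ to $s'$; the transition system is assumed serial. CTL formulas: $F ::= p \mid F\wedge F\mid F\vee F\mid \mathbf{Q}\mathsf{X}F\mid \mathbf{Q}\mathsf{F}F\mid \mathbf{Q}\mathsf{G}F\mid \mathbf{Q}[F\,\mathsf{U}\,F]$ with $\mathbf{Q}\in\{\mathsf{A},\mathsf{E}\}$ and $p$ a state formula. Encoding: $\llbracket \text{present}(a_i)\rrbracket = a_i$, $\llbracket \text{absent}(a_i)\rrbracket = a_i^\perp$; $\llbracket s\rrbracket =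 \llbracket p_1(a_1)\rrbracket^\perp$ ⅋ $\cdots$ ⅋ $\llbracket p_n(a_n)\rrbracket^\perp$; $\mathrm{pos}(s) = \llbracket p_1(a_1)\rrbracket\otimes\cdots\otimes\llbracket p_n(a_n)\rrbracket = \llbracket s\rrbracket^\perp$; $\mathrm{neg}(s) = (\llbracket p_1(a_1)\rrbracket^\perp\otimes\top)\oplus\cdots\oplus(\llbracket p_n(a_n)\rrbracket^\perp\otimes\top)$; a state formula $p$ is encoded as $\mathrm{pos}(p)$ (variables not occurring in $p$ giving $\top$); CTL $\wedge,\vee$ map to $\&,\oplus$. With $\phi=[\![F]\!]_{\mathcal{R}}$, $\psi=[\![G]\!]_{\mathcal{R}}$, and $T_{\mathsf{A}}(Y) = \mathop{\&}_{s\to s'\in\mathcal{R}}\big(\mathrm{neg}(s)\oplus(\mathrm{pos}(s)\otimes(\llbracket s'\rrbracket$ ⅋ $Y))\big)$, $T_{\mathsf{E}}(Y)=\bigoplus_{s\to s'\in\mathcal{R}}\big(\mathrm{pos}(s)\otimes(\llbracket s'\rrbracket$ ⅋ $Y)\big)$: $[\![\mathsf{AX}F]\!]=T_{\mathsf{A}}(\phi)$, $[\![\mathsf{EX}F]\!]=T_{\mathsf{E}}(\phi)$, $[\![\mathsf{AF}F]\!]=\mu Y.\,\phi\oplus T_{\mathsf{A}}(Y)$, $[\![\mathsf{EF}F]\!]=\mu Y.\,\phi\oplus T_{\mathsf{E}}(Y)$, $[\![\mathsf{AG}F]\!]=\nu Y.\,\phi\,\&\,T_{\mathsf{A}}(Y)$,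 $[\![\mathsf{EG}F]\!]=\nu Y.\,\phi\,\&\,T_{\mathsf{E}}(Y)$, $[\![\mathsf{A}[F\,\mathsf{U}\,G]]\!]=\mu Y.\,\psi\oplus(\phi\,\&\,T_{\mathsf{A}}(Y))$, $[\![\mathsf{E}[F\,\mathsf{U}\,G]]\!]=\mu Y.\,\psi\oplus(\phi\,\&\,T_{\mathsf{E}}(Y))$. *)

(* Defs.v *)
From mathcomp Require Import all_boot.
From Stdlib Require Import Permutation.

Set Implicit Arguments.
Unset Strict Implicit.
Unset Printing Implicit Defensive.

(* muMALL (propositional), formulas in negation normal form, with      *)
(* fixed-point variables as de Bruijn indices.  Variables only occur   *)
(* positively (negation is the syntactic De Morgan dual).             *)

Inductive form : Type :=
| Pos  : nat -> form
| Neg  : nat -> form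
| Var  : nat -> form
| One  : form
| Bot  : form
| Zero : form
| Top  : form
| Tens : form -> form -> form
| Par  : form -> form -> form
| Plus : form -> form -> form
| With : form -> form -> form
| Mu   : form -> form           (* mu X. B, X = index 0 in B *)
| Nu   : form -> form.

Fixpoint dual (A : form) : form :=
  match A with
  | Pos i => Neg i
  | Neg i => Pos i
  | Var k => Var k
  | One => Bot
  | Bot => One
  | Zero => Top
  | Top => Zero
  | Tens A B => Par (dual A) (dual B)
  | Par A B => Tens (dual A) (dual B)
  | Plus A B => With (dual A) (dual B)
  | With A B => Plus (dual A) (dual B)
  | Mu B => Nu (dual B)
  | Nu B => Mu (dual B)
  end.

Fixpoint closed_at (d : nat) (A : form) : bool :=
  match A with
  | Var k => k < d
  | Tens A B | Par A B | Plus A B | With A B => closed_at d A && closed_at d B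
  | Mu B | Nu B => closed_at d.+1 B
  | _ => true
  end.

Definition closed (A : form) : bool := closed_at 0 A.

(* substitution of a closed formula S for the variable bound at depth d *)
Fixpoint subst_at (d : nat) (S A : form) : form :=
  match A with
  | Var k => if k == d then S else if d < k then Var k.-1 else Var k
  | Tens A B => Tens (subst_at d S A) (subst_at d S B)
  | Par A B => Par (subst_at d S A) (subst_at d S B)
  | Plus A B => Plus (subst_at d S A) (subst_at d S B)
  | With A B => With (subst_at d S A) (subst_at d S B)
  | Mu B => Mu (subst_at d.+1 S B)
  | Nu B => Nu (subst_at d.+1 S B)
  | A => A
  end.

Definition inst (B S : form) : form := subst_at 0 S B.

Inductive provable : list form -> Prop :=
| pr_ex   : forall G D, Permutation G D -> provable G -> provable D
| pr_init : forall i, provable [:: Pos i; Neg i]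
| pr_cut  : forall A G D, closed A ->
    provable (A :: G) -> provable (dual A :: D) -> provable (G ++ D)
| pr_one  : provable [:: One]
| pr_bot  : forall G, provable G -> provable (Bot :: G)
| pr_top  : forall G, provable (Top :: G)
| pr_tens : forall A B G D,
    provable (A :: G) -> provable (B :: D) -> provable (Tens A B :: G ++ D)
| pr_par  : forall A B G, provable (A :: B :: G) -> provable (Par A B :: G)
| pr_plus_l : forall A B G, provable (A :: G) -> provable (Plus A B :: G)
| pr_plus_r : forall A B G, provable (B :: G) -> provable (Plus A B :: G)
| pr_with : forall A B G,
    provable (A :: G) -> provable (B :: G) -> provable (With A B :: G)
| pr_mu   : forall B G, provable (inst B (Mu B) :: G) -> provable (Mu B :: G)
| pr_nu   : forall B S G, closed S ->
    provable (S :: G) -> provable [:: dual S; inst B S] ->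
    provable (Nu B :: G).

Fixpoint bigop_ne (op : form -> form -> form) (u : form) (l : list form) : form :=
  match l with
  | [::] => u
  | [:: x] => x
  | x :: l' => op x (bigop_ne op u l')
  end.

(* V = {a_0, ..., a_(n-1)};  a state is a valuation V -> bool *)
Definition state (n : nat) := {ffun 'I_n -> bool}.
(* a state formula: conjunction of literals on a subset of V
   (None = variable does not occur) *)
Definition sform (n : nat) := {ffun 'I_n -> option bool}.
Definition rule (n : nat) := (state n * state n)%type.

Inductive ctl (n : nat) : Type :=
| CSt  : sform n -> ctl n
| CAnd : ctl n -> ctl n -> ctl n
| COr  : ctl n -> ctl n -> ctl n
| CAX  : ctl n -> ctl n
| CEX  : ctl n -> ctl n
| CAF  : ctl n -> ctl n
| CEF  : ctl n -> ctl n
| CAG  : ctl n -> ctl n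
| CEG  : ctl n -> ctl n
| CAU  : ctl n -> ctl n -> ctl n
| CEU  : ctl n -> ctl n -> ctl n.

Section Semantics.
Variables (n : nat) (R : seq (rule n)).

Definition step (s t : state n) : Prop := (s, t) \in R.

Definition serial : Prop := forall s : state n, exists t, step s t.

Definition is_path (s : state n) (p : nat -> state n) : Prop :=
  p 0 = s /\ forall k, step (p k) (p k.+1).

Definition sat_sf (s : state n) (p : sform n) : Prop :=
  forall i b, p i = Some b -> s i = b.

Fixpoint sat (s : state n) (F : ctl n) {struct F} : Prop :=
  match F with
  | CSt p => sat_sf s p
  | CAnd F G => sat s F /\ sat s G
  | COr F G => sat s F \/ sat s G
  | CAX F => forall t, step s t -> sat t F
  | CEX F => exists t, step s t /\ sat t F
  | CAF F => forall p, is_path s p -> exists k, sat (p k) F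
  | CEF F => exists p, is_path s p /\ exists k, sat (p k) F
  | CAG F => forall p, is_path s p -> forall k, sat (p k) F
  | CEG F => exists p, is_path s p /\ forall k, sat (p k) F
  | CAU F G => forall p, is_path s p ->
      exists k, sat (p k) G /\ forall j, j < k -> sat (p j) F
  | CEU F G => exists p, is_path s p /\
      exists k, sat (p k) G /\ forall j, j < k -> sat (p j) F
  end.

Definition vars : seq 'I_n := enum 'I_n.

Definition lit (s : state n) (i : 'I_n) : form :=
  if s i then Pos i else Neg i.

Definition enc_state (s : state n) : form :=
  bigop_ne Par Bot [seq dual (lit s i) | i <- vars].

Definition pos (s : state n) : form :=
  bigop_ne Tens One [seq lit s i | i <- vars].

Definition neg (s : state n) : form :=
  bigop_ne Plus Zero [seq Tens (dual (lit s i)) Top | i <- vars].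

Definition pos_sf (p : sform n) : form :=
  bigop_ne Tens One
    [seq (match p i with Some true => Pos i | Some false => Neg i | None => Top end)
    | i <- vars].

Definition TA (Y : form) : form :=
  bigop_ne With Top
    [seq Plus (neg r.1) (Tens (pos r.1) (Par (enc_state r.2) Y)) | r <- R].

Definition TE (Y : form) : form :=
  bigop_ne Plus Zero
    [seq Tens (pos r.1) (Par (enc_state r.2) Y) | r <- R].

(* encodings of subformulas are closed, so they need no shifting
   under the binder; Var 0 is the bound variable Y *)
Fixpoint enc (F : ctl n) : form :=
  match F with
  | CSt p => pos_sf p
  | CAnd F G => With (enc F) (enc G)
  | COr F G => Plus (enc F) (enc G)
  | CAX F => TA (enc F)
  | CEX F => TE (enc F)
  | CAF F => Mu (Plus (enc F) (TA (Var 0)))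
  | CEF F => Mu (Plus (enc F) (TE (Var 0)))
  | CAG F => Nu (With (enc F) (TA (Var 0)))
  | CEG F => Nu (With (enc F) (TE (Var 0)))
  | CAU F G => Mu (Plus (enc G) (With (enc F) (TA (Var 0))))
  | CEU F G => Mu (Plus (enc G) (With (enc F) (TE (Var 0))))
  end.

End Semantics.

(* Main.v *)
Require Import Defs.
From mathcomp Require Import all_boot.
From Stdlib Require Import Permutation Classical FunctionalExtensionality PropExtensionality ClassicalEpsilon.

Set Implicit Arguments.
Unset Strict Implicit.
Unset Printing Implicit Defensive.

Section Sem.
Variable G : finType.
Variable PA : nat -> {set G} -> Prop.

Definition fam := {set G} -> Prop.
Definition incl (X Y : fam) := forall x, X x -> Y x.
Definition Dl (X : fam) : fam := fun x => ~ X (~: x).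
Definition TensU (X Y : fam) : fam :=
  fun x => exists a : {set G}, a \subset x /\ X a /\ Y (x :\: a).
Definition ParU (X Y : fam) : fam := Dl (TensU (Dl X) (Dl Y)).
Definition OneU : fam := fun x => x = set0.
Definition lfp (f : fam -> fam) : fam := fun x => forall X, incl (f X) X -> X x.
Definition gfp (f : fam -> fam) : fam := fun x => exists X, incl X (f X) /\ X x.
Definition scons (X : fam) (r : nat -> fam) (k : nat) : fam :=
  match k with 0 => X | k.+1 => r k end.

Fixpoint sem (A : form) (r : nat -> fam) : fam :=
  match A with
  | Pos i => PA i
  | Neg i => Dl (PA i)
  | Var k => r k
  | One => OneU
  | Bot => Dl OneU
  | Zero => fun _ => False
  | Top => fun _ => True
  | Tens A B => TensU (sem A r) (sem B r)
  | Par A B => ParU (sem A r) (sem B r)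
  | Plus A B => fun x => sem A r x \/ sem B r x
  | With A B => fun x => sem A r x /\ sem B r x
  | Mu B => lfp (fun X => sem B (scons X r))
  | Nu B => gfp (fun X => sem B (scons X r))
  end.

Lemma famext (X Y : fam) : (forall x, X x <-> Y x) -> X = Y.
Proof.
move=> H; apply: functional_extensionality => x; apply: propositional_extensionality; exact: H.
Qed.

Lemma DD X : Dl (Dl X) = X.
Proof.
apply: famext => x; rewrite /Dl setCK; split; [exact: NNPP | by move=> h; apply].
Qed.

Lemma D_anti X Y : incl X Y -> incl (Dl Y) (Dl X).
Proof. by move=> h x hy hx; apply: hy; apply: h. Qed.

Lemma TensU_mono X X' Y Y' : incl X X' -> incl Y Y' -> incl (TensU X Y) (TensU X' Y').
Proof. move=> h1 h2 x [a [s [ha hb]]]; exists a; split => //; split; [exact: h1|exact: h2]. Qed.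

Lemma ParU_mono X X' Y Y' : incl X X' -> incl Y Y' -> incl (ParU X Y) (ParU X' Y').
Proof.
move=> h1 h2; apply: D_anti; apply: TensU_mono; exact: D_anti.
Qed.

Lemma setDDsub (a x : {set G}) : a \subset x -> x :\: (x :\: a) = a.
Proof.
move=> /subsetP h; apply/setP => g; rewrite !inE.
case ga: (g \in a); case gx: (g \in x) => //=.
by rewrite (h _ ga) in gx.
Qed.

Lemma TensU_comm X Y : TensU X Y = TensU Y X.
Proof.
suff H : forall X Y, incl (TensU X Y) (TensU Y X).
  by apply: famext => x; split; apply: H.
move=> {}X {}Y x [a [s [ha hb]]]; exists (x :\: a); split; first exact: subsetDl.
by rewrite setDDsub.
Qed.

Lemma TensU_assoc X Y Z : TensU (TensU X Y) Z = TensU X (TensU Y Z).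
Proof.
apply: famext => x; split.
- move=> [a [sa [[b [sb [hb hab]]] hz]]].
  exists b; split; first exact: subset_trans sb sa.
  split => //; exists (a :\: b); split; first exact: setSD.
  split => //.
  have -> : (x :\: b) :\: (a :\: b) = x :\: a; last by [].
  apply/setP => g; rewrite !inE.
  move/subsetP: sb => /(_ g) h1; move/subsetP: sa => /(_ g) h2.
  by case: (g \in a) h1 h2; case: (g \in b); case: (g \in x) => //= h1 h2; (try have := h1 isT); (try have := h2 isT).
- move=> [b [sb [hb [c [sc [hc hz]]]]]].
  exists (b :|: c); split.
    by rewrite subUset sb /= (subset_trans sc) // subsetDl.
  split.
    exists b; split; first exact: subsetUl.
    split => //.
    have -> : (b :|: c) :\: b = c; last by [].
    apply/setP => g; rewrite !inE.
    move/subsetP: sc => /(_ g) h1; rewrite !inE in h1.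
    by case: (g \in b) h1; case: (g \in c) => //= h1; have := h1 isT.
  have -> : x :\: (b :|: c) = (x :\: b) :\: c; last by [].
  by apply/setP => g; rewrite !inE; case: (g \in b); case: (g \in c).
Qed.

Lemma TensU_unit Y : TensU OneU Y = Y.
Proof.
apply: famext => x; split.
- by move=> [a [_ [-> h]]]; rewrite setD0 in h.
- move=> h; exists set0; split; first exact: sub0set.
  by rewrite setD0.
Qed.

Lemma ParU_comm X Y : ParU X Y = ParU Y X.
Proof. by rewrite /ParU TensU_comm. Qed.

Lemma ParU_assoc X Y Z : ParU (ParU X Y) Z = ParU X (ParU Y Z).
Proof. by rewrite /ParU !DD TensU_assoc. Qed.

Lemma ParU_unit Y : ParU (Dl OneU) Y = Y.
Proof. by rewrite /ParU DD TensU_unit DD. Qed.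

Lemma ParU_unitr Y : ParU Y (Dl OneU) = Y.
Proof. by rewrite ParU_comm ParU_unit. Qed.

Lemma ParU0 X Y : ParU X Y set0 <-> incl (Dl X) Y.
Proof.
rewrite /ParU /Dl /TensU; split.
- move=> h x hx; apply: NNPP => hy; apply: h.
  exists x; split; first by rewrite setC0 subsetT.
  split => //.
  by rewrite setC0 setTD /Dl setCK.
- move=> h [a [_ [ha hb]]]; apply: hb.
  rewrite setC0 setTD setCK; exact: h.
Qed.

Lemma D_Tens X Y : Dl (TensU X Y) = ParU (Dl X) (Dl Y).
Proof. by rewrite /ParU !DD. Qed.

Lemma D_Par X Y : Dl (ParU X Y) = TensU (Dl X) (Dl Y).
Proof. by rewrite /ParU DD. Qed.

Definition mono (f : fam -> fam) := forall X Y, incl X Y -> incl (f X) (f Y).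

Lemma lfp_fold f : mono f -> incl (f (lfp f)) (lfp f).
Proof.
move=> m x hx X hX; apply: (hX); apply: (m (lfp f) X) hx => y hy; exact: hy X hX.
Qed.

Lemma lfp_least f X : incl (f X) X -> incl (lfp f) X.
Proof. by move=> h x hx; apply: hx. Qed.

Lemma gfp_greatest f X : incl X (f X) -> incl X (gfp f).
Proof. by move=> h x hx; exists X. Qed.

Lemma gfp_unfold f : mono f -> incl (gfp f) (f (gfp f)).
Proof.
move=> m x [X [hX hx]]; apply: (m X); last exact: hX.
by move=> y hy; exists X.
Qed.

Lemma D_lfp f : Dl (lfp f) = gfp (fun X => Dl (f (Dl X))).
Proof.
apply: famext => x; split.
- move=> h; apply: NNPP => hn; apply: h => X hX.
  apply: NNPP => hx; apply: hn.
  exists (Dl X); split; last exact: hx.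
  rewrite DD; exact: D_anti.
- move=> [Z [hZ hx]] h.
  have cl : incl (f (Dl Z)) (Dl Z).
    move=> y hy hz; have := hZ _ hz; rewrite /Dl setCK; by apply.
  have := h (Dl Z) cl; rewrite /Dl setCK; by apply.
Qed.

Lemma D_gfp f : Dl (gfp f) = lfp (fun X => Dl (f (Dl X))).
Proof.
rewrite -[RHS]DD D_lfp.
have -> : (fun X => Dl ((fun X0 => Dl (f (Dl X0))) (Dl X))) = f.
  by apply: functional_extensionality => X; rewrite !DD.
by [].
Qed.


Lemma sem_mono A : forall r r', (forall k, incl (r k) (r' k)) -> incl (sem A r) (sem A r').
Proof.
elim: A => /= [i r r' h x //|i r r' h x //|k r r' h|r r' h x //|r r' h x //|r r' h x //|r r' h x //
  |A IHA B IHB r r' h|A IHA B IHB r r' h|A IHA B IHB r r' h|A IHA B IHB r r' h|B IH r r' h|B IH r r' h].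
- exact: h.
- apply: TensU_mono; [exact: IHA | exact: IHB].
- apply: ParU_mono; [exact: IHA | exact: IHB].
- move=> x [hx|hx]; [left; exact: (IHA r r') | right; exact: (IHB r r')].
- move=> x [hx hy]; split; [exact: (IHA r r') | exact: (IHB r r')].
- move=> x hx X hX; apply: hx => y hy; apply: hX.
  apply: (IH (scons X r) (scons X r')) hy => -[|k] /=; [by move=> z | exact: h].
- move=> x [X [hX hx]]; exists X; split => // y hy.
  apply: (IH (scons X r) (scons X r')); last exact: hX.
  by move=> -[|k] /=; [move=> z | exact: h].
Qed.

Lemma sem_closed A : forall d r r', closed_at d A -> (forall k, k < d -> r k = r' k) ->
  sem A r = sem A r'.
Proof.
elim: A => //=.
- by move=> k d r r' hk h; apply: h.
- by move=> A IHA B IHB d r r' /andP [h1 h2] h; rewrite (IHA d r r') // (IHB d r r').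
- by move=> A IHA B IHB d r r' /andP [h1 h2] h; rewrite (IHA d r r') // (IHB d r r').
- by move=> A IHA B IHB d r r' /andP [h1 h2] h; rewrite (IHA d r r') // (IHB d r r').
- by move=> A IHA B IHB d r r' /andP [h1 h2] h; rewrite (IHA d r r') // (IHB d r r').
- move=> B IH d r r' hc h; congr lfp; apply: functional_extensionality => X.
  apply: (IH d.+1) => // -[|k] //= hk; exact: h.
- move=> B IH d r r' hc h; congr gfp; apply: functional_extensionality => X.
  apply: (IH d.+1) => // -[|k] //= hk; exact: h.
Qed.

Lemma sem_closed0 A r r' : closed_at 0 A -> sem A r = sem A r'.
Proof. by move=> h; apply: sem_closed h _. Qed.

Lemma scons_D X r : (fun k => Dl (scons X r k)) = scons (Dl X) (fun k => Dl (r k)).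
Proof. by apply: functional_extensionality => -[|k]. Qed.

Lemma sem_dual A : forall r, sem (dual A) r = Dl (sem A (fun k => Dl (r k))).
Proof.
elim: A => /= [i r|i r|k r|r|r|r|r|A IHA B IHB r|A IHA B IHB r|A IHA B IHB r|A IHA B IHB r|B IH r|B IH r].
- by [].
- by rewrite DD.
- by rewrite DD.
- by [].
- by rewrite DD.
- by apply: famext => x; rewrite /Dl; split => // _ [].
- by apply: famext => x; rewrite /Dl; split => // h; exact: h I.
- by rewrite IHA IHB D_Tens.
- by rewrite IHA IHB D_Par.
- rewrite IHA IHB; apply: famext => x; rewrite /Dl; split.
  + by move=> [h1 h2] [h|h].
  + by move=> h; split => h'; apply: h; [left|right].
- rewrite IHA IHB; apply: famext => x; rewrite /Dl; split.
  + by move=> [h|h] [h1 h2].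
  + move=> h; apply: NNPP => hn; apply: h; split; apply: NNPP => h'; apply: hn; [left|right]; exact: h'.
- rewrite D_lfp; congr gfp; apply: functional_extensionality => X.
  by rewrite IH scons_D.
- rewrite D_gfp; congr lfp; apply: functional_extensionality => X.
  by rewrite IH scons_D.
Qed.

Lemma sem_dual_closed A r : closed_at 0 A -> sem (dual A) r = Dl (sem A r).
Proof. by move=> h; rewrite sem_dual (sem_closed0 _ r h). Qed.

Definition ins (d : nat) (Z : fam) (r : nat -> fam) (k : nat) : fam :=
  if k < d then r k else if k == d then Z else r k.-1.

Lemma ins_scons d Z X r : ins d.+1 Z (scons X r) = scons X (ins d Z r).
Proof.
apply: functional_extensionality => -[|k] //=.
rewrite /ins ltnS eqSS; case: ltnP => // hk; case: eqP => // hne.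
case: k hk hne => [|k] hk hne //=.
by move: hk; rewrite leqn0 => /eqP h; case: hne.
Qed.

Lemma ins0 Z r : ins 0 Z r = scons Z r.
Proof. by apply: functional_extensionality => -[|k]. Qed.

Lemma sem_subst S A : forall d Z r, (forall r', sem S r' = Z) ->
  sem (subst_at d S A) r = sem A (ins d Z r).
Proof.
elim: A => //=.
- move=> k d Z r hS; rewrite /ins.
  case: eqP => [->|hne]; first by rewrite ltnn hS.
  case: ltnP => hlt /=.
  + by rewrite ltnNge (ltnW hlt) /=.
  + have -> : k < d by rewrite ltn_neqAle hlt andbT; apply/eqP.
    by [].
- by move=> A IHA B IHB d Z r hS; rewrite (IHA d Z) // (IHB d Z).
- by move=> A IHA B IHB d Z r hS; rewrite (IHA d Z) // (IHB d Z).
- by move=> A IHA B IHB d Z r hS; rewrite (IHA d Z) // (IHB d Z).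
- by move=> A IHA B IHB d Z r hS; rewrite (IHA d Z) // (IHB d Z).
- move=> B IH d Z r hS; congr lfp; apply: functional_extensionality => X.
  by rewrite (IH d.+1 Z) // ins_scons.
- move=> B IH d Z r hS; congr gfp; apply: functional_extensionality => X.
  by rewrite (IH d.+1 Z) // ins_scons.
Qed.

Lemma sem_inst B S r : closed_at 0 S -> sem (inst B S) r = sem B (scons (sem S r) r).
Proof.
move=> h; rewrite /inst; erewrite sem_subst; last first.
  move=> r'; exact: (sem_closed0 r' r h).
by rewrite ins0.
Qed.

End Sem.

Lemma closed_at_mono A : forall d d', d <= d' -> closed_at d A -> closed_at d' A.
Proof.
elim: A => //=.
- move=> k d d' h1 h2; exact: leq_trans h2 h1.
- by move=> A IHA B IHB d d' h /andP [h1 h2]; rewrite (IHA d d') // (IHB d d').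
- by move=> A IHA B IHB d d' h /andP [h1 h2]; rewrite (IHA d d') // (IHB d d').
- by move=> A IHA B IHB d d' h /andP [h1 h2]; rewrite (IHA d d') // (IHB d d').
- by move=> A IHA B IHB d d' h /andP [h1 h2]; rewrite (IHA d d') // (IHB d d').
- by move=> B IH d d' h; apply: IH.
- by move=> B IH d d' h; apply: IH.
Qed.

Lemma closed_dual A : forall d, closed_at d (dual A) = closed_at d A.
Proof.
elim: A => //=; first [ by move=> A IHA B IHB d; rewrite IHA IHB | by move=> B IH d; rewrite IH ].
Qed.

Lemma closed_subst S A : closed_at 0 S -> forall d, closed_at d.+1 A -> closed_at d (subst_at d S A).
Proof.
move=> hS; elim: A => //=.
- move=> k d hk; case: eqP => [_|hne]; first exact: (closed_at_mono (d:=0)).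
  case: ltnP => h /=.
  + by case: k hk hne h => // k; rewrite ltnS.
  + rewrite ltnS leq_eqVlt in hk; case/orP: hk => // /eqP; done.
- by move=> A IHA B IHB d /andP [h1 h2]; rewrite IHA // IHB.
- by move=> A IHA B IHB d /andP [h1 h2]; rewrite IHA // IHB.
- by move=> A IHA B IHB d /andP [h1 h2]; rewrite IHA // IHB.
- by move=> A IHA B IHB d /andP [h1 h2]; rewrite IHA // IHB.
- by move=> B IH d h; apply: IH.
- by move=> B IH d h; apply: IH.
Qed.


Lemma perm_all T (P : pred T) (l l' : seq T) : Permutation l l' -> all P l = all P l'.
Proof.
elim => //= [x l1 l2 _ ->|x y l1|l1 l2 l3 _ -> _ ->] //.
by rewrite andbCA.
Qed.

Lemma allcE A L : all (closed_at 0) (A :: L) = closed_at 0 A && all (closed_at 0) L.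
Proof. by []. Qed.
Lemma cTens d A B : closed_at d (Tens A B) = closed_at d A && closed_at d B. Proof. by []. Qed.
Lemma cPar d A B : closed_at d (Par A B) = closed_at d A && closed_at d B. Proof. by []. Qed.
Lemma cPlus d A B : closed_at d (Plus A B) = closed_at d A && closed_at d B. Proof. by []. Qed.
Lemma cWith d A B : closed_at d (With A B) = closed_at d A && closed_at d B. Proof. by []. Qed.
Lemma cMu d B : closed_at d (Mu B) = closed_at d.+1 B. Proof. by []. Qed.
Lemma cNu d B : closed_at d (Nu B) = closed_at d.+1 B. Proof. by []. Qed.

Section Sound.
Variable G : finType.
Variable PA : nat -> {set G} -> Prop.
Variable r0 : nat -> fam G.

Definition PS (L : seq form) : fam G := foldr (fun A P => ParU (sem PA A r0) P) (Dl (@OneU G)) L.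

Lemma PS_cat L1 L2 : PS (L1 ++ L2) = ParU (PS L1) (PS L2).
Proof.
elim: L1 => /= [|A L1 IH]; first by rewrite ParU_unit.
by rewrite IH ParU_assoc.
Qed.

Lemma PS_perm L1 L2 : Permutation L1 L2 -> PS L1 = PS L2.
Proof.
elim => //= [x l1 l2 _ ->|x y l|l1 l2 l3 _ -> _ ->] //.
by rewrite -!ParU_assoc (ParU_comm (sem PA y r0)).
Qed.

Lemma PS_cons0 A L : PS (A :: L) set0 <-> incl (Dl (sem PA A r0)) (PS L).
Proof. exact: ParU0. Qed.

Theorem soundness L : provable L -> all (closed_at 0) L -> PS L set0.
Proof.
elim => {L}.
- move=> L1 L2 hp _ IH hc; rewrite -(PS_perm hp); apply: IH.
  by rewrite (perm_all _ hp).
- move=> i _; rewrite /PS /= ParU_unitr; apply/ParU0 => x; exact.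
- move=> A L1 L2 cA _ IH1 _ IH2; rewrite all_cat => /andP [c1 c2].
  have h1 : PS (A :: L1) set0 by apply: IH1; rewrite allcE c1 andbT.
  have h2 : PS (dual A :: L2) set0 by apply: IH2; rewrite allcE closed_dual c2 andbT.
  move/PS_cons0: h1 => h1; move/PS_cons0: h2; rewrite sem_dual_closed // DD => h2.
  rewrite PS_cat; apply/ParU0 => x hx; apply: h2.
  have := D_anti h1 hx; by rewrite DD.
- by move=> _; rewrite /PS /= ParU_unitr.
- by move=> L _ IH; rewrite allcE => /andP [_ hc]; rewrite /PS /= ParU_unit; apply: IH.
- move=> L _; apply/PS_cons0 => x hx; exfalso; exact: hx.
- move=> A B L1 L2 _ IH1 _ IH2; rewrite allcE cTens all_cat => /andP [/andP [cA cB] /andP [c1 c2]].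
  have h1 : PS (A :: L1) set0 by apply: IH1; rewrite allcE cA.
  have h2 : PS (B :: L2) set0 by apply: IH2; rewrite allcE cB.
  move/PS_cons0: h1 => h1; move/PS_cons0: h2 => h2.
  apply/PS_cons0; rewrite PS_cat D_Tens; exact: ParU_mono.
- move=> A B L _ IH; rewrite allcE cPar => /andP [/andP [cA cB] c].
  have : PS [:: A, B & L] set0 by apply: IH; rewrite !allcE cA cB.
  by rewrite /PS /= ParU_assoc.
- move=> A B L _ IH; rewrite allcE cPlus => /andP [/andP [cA cB] c].
  have : PS (A :: L) set0 by apply: IH; rewrite allcE cA.
  move/PS_cons0 => h.
  apply/PS_cons0 => x hx; apply: h => hA; apply: hx; by left.
- move=> A B L _ IH; rewrite allcE cPlus => /andP [/andP [cA cB] c].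
  have : PS (B :: L) set0 by apply: IH; rewrite allcE cB.
  move/PS_cons0 => h.
  apply/PS_cons0 => x hx; apply: h => hA; apply: hx; by right.
- move=> A B L _ IH1 _ IH2; rewrite allcE cWith => /andP [/andP [cA cB] c].
  have : PS (A :: L) set0 by apply: IH1; rewrite allcE cA.
  move/PS_cons0 => h1.
  have : PS (B :: L) set0 by apply: IH2; rewrite allcE cB.
  move/PS_cons0 => h2.
  apply/PS_cons0 => x hx.
  case: (classic (sem PA A r0 (~: x))) => hA; last exact: h1.
  apply: h2 => hB; apply: hx; by split.
- move=> B L _ IH; rewrite allcE cMu => /andP [cB c].
  have ci : closed_at 0 (inst B (Mu B)) by apply: closed_subst.
  have : PS (inst B (Mu B) :: L) set0 by apply: IH; rewrite allcE ci.
  move/PS_cons0 => h.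
  rewrite sem_inst // in h.
  apply/PS_cons0 => x hx; apply: h; move=> hf; apply: hx.
  apply: lfp_fold => //.
  move=> X Y hXY; apply: sem_mono => -[|k] //=.
- move=> B S L cS _ IH1 _ IH2; rewrite allcE cNu => /andP [cB c].
  have : PS (S :: L) set0 by apply: IH1; rewrite allcE c andbT.
  move/PS_cons0 => h1.
  have ci : closed_at 0 (inst B S) by apply: closed_subst.
  have h2 : PS [:: dual S; inst B S] set0.
    by apply: IH2; rewrite !allcE closed_dual ci andbT.
  move/PS_cons0: h2 => h3; rewrite /PS /= ParU_unitr sem_dual_closed // DD sem_inst // in h3.
  apply/PS_cons0 => x hx; apply: h1 => hS; apply: hx.
  exact: (gfp_greatest h3).
Qed.

End Sound.



Section Lists.
Variable G : finType.
Variable PA : nat -> {set G} -> Prop.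

Fixpoint TL (Xs : seq (fam G)) (x : {set G}) : Prop :=
  match Xs with
  | [::] => x = set0
  | X :: Xs => exists a : {set G}, a \subset x /\ X a /\ TL Xs (x :\: a)
  end.

Lemma sem_bigTens (l : seq form) r x :
  sem PA (bigop_ne Tens One l) r x <-> TL (map (fun A => sem PA A r) l) x.
Proof.
elim: l x => [|A l IH] x //=.
case: l IH => [|B l] IH.
- split.
  + move=> h; exists x; split => //; split => //; exact: setDv.
  + move=> [a [sa [ha e]]]; have -> : x = a => //.
    apply/eqP; rewrite eqEsubset sa andbT -setD_eq0; exact/eqP.
- split.
  + move=> [a [sa [ha hb]]]; exists a; split => //; split => //; exact/IH.
  + move=> [a [sa [ha hb]]]; exists a; split => //; split => //; exact/IH.
Qed.

Lemma TL_parts (T : eqType) (F : T -> fam G) (l : seq T) x :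
  TL (map F l) x -> forall i, i \in l -> exists a : {set G}, a \subset x /\ F i a.
Proof.
elim: l x => [|j l IH] x //= [a [sa [ha hb]]] i.
rewrite inE => /orP [/eqP ->|hi]; first by exists a.
have [b [sb hb']] := IH _ hb i hi; exists b; split => //.
exact: subset_trans sb (subsetDl _ _).
Qed.

Lemma sem_bigPlus (T : eqType) (F : T -> form) (l : seq T) r x :
  sem PA (bigop_ne Plus Zero (map F l)) r x -> exists i, i \in l /\ sem PA (F i) r x.
Proof.
elim: l => [|j l IH] //=.
case: l IH => [|k l] IH.
- by move=> h; exists j; rewrite inE eqxx.
- move=> [h|h]; first by exists j; rewrite inE eqxx.
  have [i [hi h']] := IH h; exists i; split => //; by rewrite inE hi orbT.
Qed.

Lemma sem_bigWith (T : eqType) (F : T -> form) (l : seq T) r x :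
  sem PA (bigop_ne With Top (map F l)) r x -> forall i, i \in l -> sem PA (F i) r x.
Proof.
elim: l => [|j l IH] //=.
case: l IH => [|k l] IH.
- by move=> h i; rewrite inE => /eqP ->.
- move=> [h1 h2] i; rewrite inE => /orP [/eqP ->|hi] //.
  exact: IH.
Qed.

End Lists.

Lemma closed_big op u (l : seq form) d :
  (forall x y, closed_at d (op x y) = closed_at d x && closed_at d y) ->
  closed_at d u -> all (closed_at d) l -> closed_at d (bigop_ne op u l).
Proof.
move=> hop hu; elim: l => [|A l IH] //= /andP [hA hl].
case: l IH hl => [|B l] IH hl //.
by rewrite hop hA IH.
Qed.

Lemma dual_bigTens (l : seq form) : dual (bigop_ne Tens One l) = bigop_ne Par Bot (map dual l).
Proof.
elim: l => [|A l IH] //=.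
by case: l IH => [|B l] IH //=; rewrite IH.
Qed.

Lemma dual_bigPlus (l : seq form) : dual (bigop_ne Plus Zero l) = bigop_ne With Top (map dual l).
Proof.
elim: l => [|A l IH] //=.
by case: l IH => [|B l] IH //=; rewrite IH.
Qed.

Section Model.
Variable n : nat.
Variable R : seq (rule n).

Definition GT := option ('I_n * bool).
Definition PAm (k : nat) (x : {set GT}) : Prop :=
  [exists i : 'I_n, (val i == k) && (if None \in x then Some (i, false) \in x else Some (i, true) \in x)].

Definition w (s : state n) : {set GT} := [set Some (i, s i) | i : 'I_n].

Lemma w_None s : None \notin w s.
Proof. by apply/imsetP => -[i _]. Qed.

Lemma w_Some s i b : (Some (i, b) \in w s) = (s i == b).
Proof.
apply/imsetP/eqP => [[j _ [-> ->]] //|<-]; by exists i.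
Qed.

Lemma enc_state_dual (s : state n) : enc_state s = dual (pos s).
Proof. by rewrite /enc_state /pos dual_bigTens -map_comp. Qed.

Lemma closed_pos (s : state n) d : closed_at d (pos s).
Proof.
apply: closed_big => [x y|//|] //; rewrite all_map; apply/allP => i _ /=; rewrite /lit; by case: (s i).
Qed.

Notation sm := (sem PAm).

Lemma sem_lit_nf (u : state n) i (a : {set GT}) r : None \notin a -> sm (lit u i) r a -> Some (i, u i) \in a.
Proof.
move=> hN; rewrite /lit; case: (u i) => /=.
- by rewrite /PAm (negbTE hN) => /existsP [j /andP [/eqP /val_inj -> h]].
- rewrite /Dl /PAm => h; apply: NNPP => hi; apply: h.
  by apply/existsP; exists i; rewrite eqxx /= inE hN /= inE; apply/negP.
Qed.

Lemma sem_dlit_nf (u : state n) i (a : {set GT}) r : None \notin a -> sm (dual (lit u i)) r a -> Some (i, ~~ u i) \in a.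
Proof.
move=> hN; rewrite /lit; case: (u i) => /=.
- rewrite /Dl /PAm => h; apply: NNPP => hi; apply: h.
  by apply/existsP; exists i; rewrite eqxx /= inE hN /= inE; apply/negP.
- by rewrite /PAm (negbTE hN) => /existsP [j /andP [/eqP /val_inj -> h]].
Qed.

Lemma sem_lit_single (u : state n) i r : sm (lit u i) r [set Some (i, u i)].
Proof.
rewrite /lit; case: (u i) => /=.
- rewrite /PAm; apply/existsP; exists i; rewrite eqxx /= !inE /=; by rewrite eqxx.
- rewrite /Dl /PAm => /existsP [j /andP [/eqP /val_inj -> h]].
  by move: h; rewrite !inE /= eqxx.
Qed.

Lemma sub_w_nf (a : {set GT}) s : a \subset w s -> None \notin a.
Proof. move=> /subsetP h; apply/negP => /h; by rewrite (negbTE (w_None s)). Qed.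

Lemma pos_w (s : state n) r : sm (pos s) r (w s).
Proof.
apply/sem_bigTens.
have : uniq (vars n) by exact: enum_uniq.
have : forall i : 'I_n, i \in vars n by move=> i; rewrite /vars mem_enum.
have -> : w s = [set Some (i, s i) | i in vars n].
  apply/setP => g; apply/imsetP/imsetP => -[i hi ->]; exists i => //.
  by rewrite /vars mem_enum.
move=> _; elim: (vars n) => [|i l IH] /=.
- move=> _; apply/setP => g; rewrite in_set0; apply/negP => /imsetP [j]; by rewrite in_nil.
- move=> /andP [hi hu]; exists [set Some (i, s i)]; split.
    by rewrite sub1set; apply/imsetP; exists i; rewrite ?inE ?eqxx.
  split; first exact: sem_lit_single.
  have -> : [set Some (j, s j) | j in i :: l] :\: [set Some (i, s i)] = [set Some (j, s j) | j in l].
    apply/setP => g; rewrite !inE; apply/andP/imsetP.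
    + move=> [hg /imsetP [j]]; rewrite inE => /orP [/eqP ->|hj] e.
        by rewrite e eqxx in hg.
      by exists j.
    + move=> [j hj ->]; split.
        apply/negP => /eqP [e]; rewrite e in hj; by rewrite hj in hi.
      apply/imsetP; exists j => //; by rewrite inE hj orbT.
  exact: IH.
Qed.

Lemma pos_sub (u s : state n) (a : {set GT}) r : a \subset w s -> sm (pos u) r a -> u = s /\ a = w s.
Proof.
move=> sa /sem_bigTens; rewrite -map_comp => /TL_parts hp.
have hin : forall i, Some (i, u i) \in a.
  move=> i; have [b [sb hb]] := hp i (mem_enum _ i).
  have := sem_lit_nf (sub_w_nf (subset_trans sb sa)) hb.
  by move/subsetP: sb => /[apply].
have eus : u = s.
  apply/ffunP => i; have := hin i; move/subsetP: sa => /[apply].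
  by rewrite w_Some => /eqP.
split => //; apply/eqP; rewrite eqEsubset sa /=.
apply/subsetP => g /imsetP [i _ ->]; rewrite -eus; exact: hin.
Qed.

Lemma neg_w (s : state n) r : ~ sm (neg s) r (w s).
Proof.
move=> /sem_bigPlus [i [_ [a [sa [ha _]]]]].
have := sem_dlit_nf (sub_w_nf sa) ha; move/subsetP: sa => /[apply].
by rewrite w_Some; case: (s i).
Qed.

Lemma TA_w (s : state n) Y r : sm (TA R Y) r (w s) -> forall v, (s, v) \in R -> sm Y r (w v).
Proof.
move=> h v hv; have := sem_bigWith h hv => /= -[/neg_w //|[a [sa [ha hb]]]].
have [_ ea] := pos_sub sa ha; rewrite ea setDv in hb.
move/ParU0: hb; rewrite enc_state_dual sem_dual_closed ?closed_pos // DD; apply.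
exact: pos_w.
Qed.

Lemma TE_w (s : state n) Y r : sm (TE R Y) r (w s) -> exists v, (s, v) \in R /\ sm Y r (w v).
Proof.
move=> /sem_bigPlus [[u v] [huv h]].
have [a [sa [ha hb]]] : TensU (sm (pos u) r) (ParU (sm (enc_state v) r) (sm Y r)) (w s) := h.
have [eu ea] := pos_sub sa ha; rewrite ea setDv in hb; rewrite eu in huv.
exists v; split => //.
move/ParU0: hb; rewrite enc_state_dual sem_dual_closed ?closed_pos // DD; apply.
exact: pos_w.
Qed.

Lemma pos_sf_w (s : state n) p r : sm (pos_sf p) r (w s) -> sat_sf s p.
Proof.
move=> /sem_bigTens; rewrite -map_comp => /TL_parts hp i b e.
have [a [sa ha]] := hp i (mem_enum _ i).
rewrite /= e in ha.
have hN := sub_w_nf sa.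
case: b e ha => e ha.
- have : Some (i, true) \in a.
    by move: ha => /=; rewrite /PAm (negbTE hN) => /existsP [j /andP [/eqP /val_inj -> h]].
  by move/subsetP: sa => /[apply]; rewrite w_Some => /eqP.
- have : Some (i, false) \in a.
    move: ha => /=; rewrite /Dl /PAm => h; apply: NNPP => hi; apply: h.
    by apply/existsP; exists i; rewrite eqxx /= inE hN /= inE; apply/negP.
  by move/subsetP: sa => /[apply]; rewrite w_Some => /eqP.
Qed.

End Model.



Section Paths.
Variable n : nat.
Variable R : seq (rule n).

Lemma path_exists : serial R -> forall t, exists p, is_path R t p.
Proof.
move=> hs t.
pose next (s : state n) := odflt s [pick v | (s, v) \in R].
exists (fun k => iter k next t); split => // k /=.
rewrite /step /next; case: pickP => [v hv //|hn].
have [v hv] := hs (iter k next t); by have := hn v; rewrite /step in hv; rewrite hv.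
Qed.

Lemma path_shift t p : is_path R t p -> is_path R (p 1) (fun k => p k.+1).
Proof. by move=> [_ h]; split => // k; exact: h. Qed.

Lemma path_cons t v q : step R t v -> is_path R v q ->
  is_path R t (fun k => if k is k'.+1 then q k' else t).
Proof. by move=> h [q0 hq]; split => // -[|k] //=; rewrite q0. Qed.

Lemma path_step t p : is_path R t p -> (t, p 1) \in R.
Proof. by move=> [p0 h]; have := h 0; rewrite p0. Qed.

End Paths.

Section Adequacy.
Variable n : nat.
Variable R : seq (rule n).
Hypothesis hser : serial R.

Notation sm := (sem (@PAm n)).

Lemma adequacy F : forall s r, sm (enc R F) r (w s) -> sat R s F.
Proof.
elim: F => [p|F1 IH1 F2 IH2|F1 IH1 F2 IH2|F IH|F IH|F IH|F IH|F IH|F IH|F1 IH1 F2 IH2|F1 IH1 F2 IH2] s r /=.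
- exact: pos_sf_w.
- by move=> [h1 h2]; split; [exact: IH1 h1 | exact: IH2 h2].
- by move=> [h|h]; [left; exact: IH1 h | right; exact: IH2 h].
- move=> h t ht; exact: IH _ _ (TA_w h ht).
- move=> h; have [v [hv h']] := TE_w h; exists v; split => //; exact: IH _ _ h'.
-
  move=> h.
  pose Xg : fam (GT n) := fun x => forall t, x = w t -> sat R t (CAF F).
  have cl : incl (sm (Plus (enc R F) (TA R (Var 0))) (scons Xg r)) Xg.
    move=> x hx t et; subst x; case: hx => [hF|hT].
    + move=> p [p0 _]; exists 0; rewrite p0; exact: IH _ _ hF.
    + have H := TA_w hT.
      move=> p hp; have hv := path_step hp.
      have [k hk] := H (p 1) hv (p 1) erefl _ (path_shift hp).
      by exists k.+1.
  exact: (lfp_least cl h s erefl).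
-
  move=> h.
  pose Xg : fam (GT n) := fun x => forall t, x = w t -> sat R t (CEF F).
  have cl : incl (sm (Plus (enc R F) (TE R (Var 0))) (scons Xg r)) Xg.
    move=> x hx t et; subst x; case: hx => [hF|hT].
    + have [p hp] := path_exists hser t.
      by exists p; split => //; exists 0; case: hp => -> _; exact: IH _ _ hF.
    + have [v [hv H]] := TE_w hT.
      have [q [hq [k hk]]] := H v erefl.
      exists (fun k => if k is k'.+1 then q k' else t); split; first exact: path_cons hv hq.
      by exists k.+1.
  exact: (lfp_least cl h s erefl).
-
  move=> [X [hX hx]] p hp.
  have inv : forall k, X (w (p k)).
    elim => [|k IHk]; first by case: hp => -> _.
    have [_ hT] := hX _ IHk.
    by have := TA_w hT (proj2 hp k).
  move=> k; have [hF _] := hX _ (inv k); exact: IH _ _ hF.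
-
  move=> [X [hX hx]].
  have hn : forall t, exists v, step R t v /\ (X (w t) -> X (w v)).
    move=> t; case: (classic (X (w t))) => ht.
    + have [_ hT] := hX _ ht; have [v [hv h']] := TE_w hT.
      by exists v; split.
    + have [p hp] := path_exists hser t; exists (p 1); split; last by [].
      exact: path_step hp.
  pose next t := proj1_sig (constructive_indefinite_description _ (hn t)).
  have hnext : forall t, step R t (next t) /\ (X (w t) -> X (w (next t))).
    move=> t; exact: proj2_sig (constructive_indefinite_description _ (hn t)).
  exists (fun k => iter k next s); split.
    by split => // k; exact: (hnext _).1.
  have inv : forall k, X (w (iter k next s)).
    elim => [|k IHk] //=; exact: (hnext _).2 IHk.
  move=> k; have [hF _] := hX _ (inv k); exact: IH _ _ hF.
-
  move=> h.
  pose Xg : fam (GT n) := fun x => forall t, x = w t -> sat R t (CAU F1 F2).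
  have cl : incl (sm (Plus (enc R F2) (With (enc R F1) (TA R (Var 0)))) (scons Xg r)) Xg.
    move=> x hx t et; subst x; case: hx => [hG|[hF hT]].
    + move=> p [p0 _]; exists 0; rewrite p0; split => //; exact: IH2 _ _ hG.
    + have H := TA_w hT.
      move=> p hp; have hv := path_step hp.
      have [k [hk hj]] := H (p 1) hv (p 1) erefl _ (path_shift hp).
      exists k.+1; split => // -[|j] hjk; first by case: hp => -> _; exact: IH1 _ _ hF.
      exact: hj.
  exact: (lfp_least cl h s erefl).
-
  move=> h.
  pose Xg : fam (GT n) := fun x => forall t, x = w t -> sat R t (CEU F1 F2).
  have cl : incl (sm (Plus (enc R F2) (With (enc R F1) (TE R (Var 0)))) (scons Xg r)) Xg.
    move=> x hx t et; subst x; case: hx => [hG|[hF hT]].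
    + have [p hp] := path_exists hser t.
      exists p; split => //; exists 0; split => //; case: hp => -> _; exact: IH2 _ _ hG.
    + have [v [hv H]] := TE_w hT.
      have [q [hq [k [hk hj]]]] := H v erefl.
      exists (fun k => if k is k'.+1 then q k' else t); split; first exact: path_cons hv hq.
      exists k.+1; split => // -[|j] hjk /=; first exact: IH1 _ _ hF.
      exact: hj.
  exact: (lfp_least cl h s erefl).
Qed.

End Adequacy.



Lemma perm_mid (A : form) (l1 l2 : seq form) : Permutation (A :: l1 ++ l2) (l1 ++ A :: l2).
Proof.
elim: l1 => [|B l1 IH] /=; first exact: Permutation_refl.
apply: perm_trans (perm_swap _ _ _) _; exact: perm_skip.
Qed.

Lemma par_big (L G : seq form) : provable (L ++ G) -> provable (bigop_ne Par Bot L :: G).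
Proof.
elim: L G => [|A L IH] G /=; first exact: pr_bot.
case: L IH => [|B L] IH //= h.
apply: pr_par; apply: (pr_ex (perm_swap _ _ _)); apply: IH.
apply: (pr_ex _ h); exact: (perm_mid A (B :: L) G).
Qed.

Lemma tens_big (T : eqType) (f : T -> form) (g : T -> seq form) (l : seq T) :
  (forall i, i \in l -> provable (f i :: g i)) ->
  provable (bigop_ne Tens One (map f l) :: flatten (map g l)).
Proof.
elim: l => [|i l IH] h /=; first exact: pr_one.
case: l IH h => [|j l] IH h /=.
  by rewrite cats0; apply: h; rewrite inE eqxx.
apply: pr_tens; first by apply: h; rewrite inE eqxx.
apply: IH => k hk; apply: h; by rewrite inE hk orbT.
Qed.

Lemma with_big (T : eqType) (f : T -> form) (l : seq T) G :
  (forall i, i \in l -> provable (f i :: G)) -> provable (bigop_ne With Top (map f l) :: G).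
Proof.
elim: l => [|i l IH] h /=; first exact: pr_top.
case: l IH h => [|j l] IH h /=.
  by apply: h; rewrite inE eqxx.
apply: pr_with; first by apply: h; rewrite inE eqxx.
apply: IH => k hk; apply: h; by rewrite inE hk orbT.
Qed.

Lemma plus_big (T : eqType) (f : T -> form) (l : seq T) G i :
  i \in l -> provable (f i :: G) -> provable (bigop_ne Plus Zero (map f l) :: G).
Proof.
elim: l => [|j l IH] //= hi h.
case: l IH hi => [|k l] IH hi /=.
  by move: hi; rewrite inE => /eqP <-.
move: hi; rewrite inE => /orP [/eqP <-|hi]; first exact: pr_plus_l.
apply: pr_plus_r; exact: IH.
Qed.

Lemma subst_closed S A : forall d, closed_at d A -> subst_at d S A = A.
Proof.
elim: A => //=.
- move=> k d hk; rewrite (ltn_eqF hk) ltnNge (ltnW hk) //.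
- by move=> A IHA B IHB d /andP [h1 h2]; rewrite IHA // IHB.
- by move=> A IHA B IHB d /andP [h1 h2]; rewrite IHA // IHB.
- by move=> A IHA B IHB d /andP [h1 h2]; rewrite IHA // IHB.
- by move=> A IHA B IHB d /andP [h1 h2]; rewrite IHA // IHB.
- by move=> B IH d h; rewrite IH.
- by move=> B IH d h; rewrite IH.
Qed.

Lemma subst_big op u (l : seq form) d S :
  (forall x y, subst_at d S (op x y) = op (subst_at d S x) (subst_at d S y)) ->
  subst_at d S u = u ->
  subst_at d S (bigop_ne op u l) = bigop_ne op u (map (subst_at d S) l).
Proof.
move=> hop hu; elim: l => [|A l IH] //=.
by case: l IH => [|B l] IH //=; rewrite hop IH.
Qed.

Section Compl.
Variable n : nat.
Variable R : seq (rule n).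
Hypothesis hser : serial R.

Definition ctx (s : state n) := [seq dual (lit s i) | i <- vars n].

Lemma closed_neg (s : state n) d : closed_at d (neg s).
Proof.
apply: closed_big => [x y|//|] //; rewrite all_map; apply/allP => i _ /=; rewrite /lit; by case: (s i).
Qed.

Lemma closed_enc_state (s : state n) d : closed_at d (enc_state s).
Proof. by rewrite enc_state_dual closed_dual closed_pos. Qed.

Lemma closed_pos_sf (p : sform n) d : closed_at d (pos_sf p).
Proof.
apply: closed_big => [x y|//|] //; rewrite all_map; apply/allP => i _ /=.
by case: (p i) => [[]|].
Qed.

Lemma closed_TA Y d : closed_at d Y -> closed_at d (TA R Y).
Proof.
move=> hY; apply: closed_big => [x y|//|] //; rewrite all_map; apply/allP => r _ /=.
by rewrite closed_neg closed_pos closed_enc_state hY.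
Qed.

Lemma closed_TE Y d : closed_at d Y -> closed_at d (TE R Y).
Proof.
move=> hY; apply: closed_big => [x y|//|] //; rewrite all_map; apply/allP => r _ /=.
by rewrite closed_pos closed_enc_state hY.
Qed.

Lemma closed_enc F : forall d, closed_at d (enc R F).
Proof.
elim: F => /= [p|F1 IH1 F2 IH2|F1 IH1 F2 IH2|F IH|F IH|F IH|F IH|F IH|F IH|F1 IH1 F2 IH2|F1 IH1 F2 IH2] d;
  rewrite ?IH ?IH1 ?IH2 ?closed_pos_sf //; first [apply: closed_TA | apply: closed_TE]; rewrite ?IH //.
Qed.

Lemma subst_Plus d S A B : subst_at d S (Plus A B) = Plus (subst_at d S A) (subst_at d S B).
Proof. by []. Qed.
Lemma subst_Tens d S A B : subst_at d S (Tens A B) = Tens (subst_at d S A) (subst_at d S B).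
Proof. by []. Qed.
Lemma subst_Par d S A B : subst_at d S (Par A B) = Par (subst_at d S A) (subst_at d S B).
Proof. by []. Qed.

Lemma subst_TA d S Y : subst_at d S (TA R Y) = TA R (subst_at d S Y).
Proof.
rewrite /TA subst_big // -map_comp; congr bigop_ne; apply: eq_map => r.
rewrite /comp subst_Plus subst_Tens subst_Par.
rewrite [subst_at d S (neg _)]subst_closed ?closed_neg //.
by rewrite [subst_at d S (pos _)]subst_closed ?closed_pos // [subst_at d S (enc_state _)]subst_closed ?closed_enc_state.
Qed.

Lemma subst_TE d S Y : subst_at d S (TE R Y) = TE R (subst_at d S Y).
Proof.
rewrite /TE subst_big // -map_comp; congr bigop_ne; apply: eq_map => r.
rewrite /comp subst_Tens subst_Par.
by rewrite [subst_at d S (pos _)]subst_closed ?closed_pos // [subst_at d S (enc_state _)]subst_closed ?closed_enc_state.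
Qed.

Lemma init_lit (s : state n) i : provable [:: lit s i; dual (lit s i)].
Proof.
rewrite /lit; case: (s i) => /=; first exact: pr_init.
apply: pr_ex (pr_init i); exact: perm_swap.
Qed.

Lemma flatten1 (T : Type) (U : Type) (f : T -> U) (l : seq T) :
  flatten [seq [:: f x] | x <- l] = map f l.
Proof. by elim: l => //= x l ->. Qed.

Lemma pos_id (s : state n) : provable (pos s :: ctx s).
Proof.
have := @tens_big _ (lit s) (fun i => [:: dual (lit s i)]) (vars n) (fun i _ => init_lit s i).
by rewrite flatten1.
Qed.

Lemma neg_diff (u s : state n) : u != s -> provable (neg u :: ctx s).
Proof.
move=> hne.
have [i hi] : exists i, u i != s i.
  case: (pickP (fun i => u i != s i)) => [i hi|h]; first by exists i.
  by case/eqP: hne; apply/ffunP => i; have := h i => /= /negbFE /eqP.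
have hv : i \in vars n by rewrite /vars mem_enum.
apply: (plus_big (f := fun i => Tens (dual (lit u i)) Top) hv).
have -> : dual (lit u i) = lit s i.
  by rewrite /lit; case: (u i) (s i) hi => -[].
rewrite /ctx; case/splitPr: hv => v1 v2.
rewrite map_cat /=.
apply: pr_ex (perm_skip _ (perm_mid _ _ _)) _.
have := pr_tens (init_lit s i) (pr_top (map (fun i => dual (lit s i)) v1 ++ map (fun i => dual (lit s i)) v2)).
by [].
Qed.

Lemma par_state (v : state n) Y : provable (Y :: ctx v) -> provable [:: Par (enc_state v) Y].
Proof.
move=> h; apply: pr_par; apply: par_big.
apply: (pr_ex _ h); have := perm_mid Y (ctx v) [::]; by rewrite cats0.
Qed.

Lemma TA_step (s : state n) Y : (forall v, (s, v) \in R -> provable (Y :: ctx v)) ->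
  provable (TA R Y :: ctx s).
Proof.
move=> h; apply: with_big => -[u v] huv /=.
case: (eqVneq u s) => [eus|hne].
- subst u; apply: pr_plus_r.
  have := pr_tens (pos_id s) (par_state (h v huv)); by rewrite cats0.
- apply: pr_plus_l; exact: neg_diff.
Qed.

Lemma TE_step (s v : state n) Y : (s, v) \in R -> provable (Y :: ctx v) ->
  provable (TE R Y :: ctx s).
Proof.
move=> hv h; apply: (plus_big (f := fun r : rule n => Tens (pos r.1) (Par (enc_state r.2) Y)) hv) => /=.
have := pr_tens (pos_id s) (par_state h); by rewrite cats0.
Qed.

Lemma pos_sf_id (s : state n) p : sat_sf s p -> provable (pos_sf p :: ctx s).
Proof.
move=> h.
have := @tens_big _ (fun i => match p i with Some true => Pos i | Some false => Neg i | None => Top end)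
   (fun i => [:: dual (lit s i)]) (vars n).
rewrite flatten1; apply => i _.
case e: (p i) => [b|]; last exact: pr_top.
have := h i b e => hb.
have := init_lit s i; rewrite /lit hb; by case: b e hb.
Qed.

End Compl.



Section Compl2.
Variable n : nat.
Variable R : seq (rule n).
Hypothesis hser : serial R.

Fixpoint W (PF PG : state n -> Prop) (k : nat) (t : state n) : Prop :=
  match k with
  | 0 => PG t
  | k.+1 => PG t \/ (PF t /\ forall v, (t, v) \in R -> W PF PG k v)
  end.

Lemma W_mono PF PG k : forall t, W PF PG k t -> W PF PG k.+1 t.
Proof.
elim: k => [|k IH] t /=; first by left.
move=> [h|[hF h]]; first by left.
by right; split => // v hv; apply: IH; apply: h.
Qed.

Lemma W_le PF PG k k' t : k <= k' -> W PF PG k t -> W PF PG k' t.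
Proof.
move=> /subnK <-; elim: (k' - k) => [|m IH] //= h.
by apply: W_mono; apply: IH.
Qed.

Lemma W_bound PF PG t (l : seq (rule n)) :
  (forall v, (t, v) \in l -> exists k, W PF PG k v) ->
  exists K, forall v, (t, v) \in l -> W PF PG K v.
Proof.
elim: l => [|[u v0] l IH] h; first by exists 0.
have [K hK] : exists K, forall v, (t, v) \in l -> W PF PG K v.
  by apply: IH => v hv; apply: h; rewrite inE hv orbT.
case: (eqVneq u t) => [eut|hne].
- subst u; have [k hk] := h v0 (mem_head _ _).
  exists (maxn K k) => v'; rewrite inE => /orP [/eqP [->]|hv'].
  + apply: W_le hk; exact: leq_maxr.
  + apply: W_le (hK _ hv'); exact: leq_maxl.
- exists K => v'; rewrite inE => /orP [/eqP [e _]|hv']; first by rewrite e eqxx in hne.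
  exact: hK.
Qed.

Lemma AU_bound PF PG s :
  (forall p, is_path R s p -> exists k, PG (p k) /\ forall j, j < k -> PF (p j)) ->
  exists k, W PF PG k s.
Proof.
move=> hAU; apply: NNPP => hn.
pose Bad t := forall k, ~ W PF PG k t.
have hB : Bad s by move=> k hk; apply: hn; exists k.
have claim : forall t, Bad t -> ~ PG t /\ (PF t -> exists v, (t, v) \in R /\ Bad v).
  move=> t ht; split; first by move=> hg; apply: (ht 0).
  move=> hf; apply: NNPP => hnv.
  have [K hK] : exists K, forall v, (t, v) \in R -> W PF PG K v.
    apply: W_bound => v hv; apply: NNPP => hk; apply: hnv; exists v; split => // k hk'.
    by apply: hk; exists k.
  by apply: (ht K.+1); right; split.
have hnext : forall t, exists v, step R t v /\ (Bad t -> PF t -> Bad v).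
  move=> t; case: (classic (Bad t /\ PF t)) => [[hb hf]|hnb].
  - have [_ h] := claim t hb; have [v [hv hbv]] := h hf; by exists v.
  - have [p hp] := path_exists hser t; exists (p 1); split; first exact: path_step hp.
    by move=> hb hf; case: hnb.
pose next t := proj1_sig (constructive_indefinite_description _ (hnext t)).
have hN : forall t, step R t (next t) /\ (Bad t -> PF t -> Bad (next t)).
  move=> t; exact: proj2_sig (constructive_indefinite_description _ (hnext t)).
pose p k := iter k next s.
have hp : is_path R s p by split => // k; exact: (hN _).1.
have inv : forall k, (forall j, j < k -> PF (p j)) -> Bad (p k).
  elim => [|k IH] hj //=.
  apply: (hN _).2; first by apply: IH => j hjk; apply: hj; exact: ltnW.
  by apply: hj.
have [k [hg hj]] := hAU p hp.
by have [hng _] := claim _ (inv k hj).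
Qed.

Lemma list_of (P : state n -> Prop) : exists L : seq (state n), forall t, t \in L <-> P t.
Proof.
suff : forall l : seq (state n), exists L : seq (state n), forall t, t \in L <-> (t \in l /\ P t).
  move=> /(_ (enum (state n))) [L hL]; exists L => t; rewrite hL mem_enum; by split => // -[].
elim => [|x l [L hL]]; first by exists [::] => t; split => // -[].
case: (classic (P x)) => hx.
- exists (x :: L) => t; split.
  + rewrite inE => /orP [/eqP -> | /hL [h1 h2]]; split => //; first by rewrite inE eqxx.
    by rewrite inE h1 orbT.
  + move=> [ht hp]; move: ht; rewrite inE => /orP [/eqP -> | h1]; first by rewrite inE eqxx.
    by rewrite inE; apply/orP; right; apply/hL.
- exists L => t; split.
  + by move=> /hL [h1 h2]; split => //; rewrite inE h1 orbT.
  + move=> [ht hp]; move: ht; rewrite inE => /orP [/eqP e | h1]; first by subst.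
    by apply/hL.
Qed.

Lemma subst_With d S A B : subst_at d S (With A B) = With (subst_at d S A) (subst_at d S B).
Proof. by []. Qed.

Lemma inst_enc_AF F M : inst (Plus (enc R F) (TA R (Var 0))) M = Plus (enc R F) (TA R M).
Proof. by rewrite /inst subst_Plus subst_TA subst_closed ?closed_enc. Qed.
Lemma inst_enc_EF F M : inst (Plus (enc R F) (TE R (Var 0))) M = Plus (enc R F) (TE R M).
Proof. by rewrite /inst subst_Plus subst_TE subst_closed ?closed_enc. Qed.
Lemma inst_enc_AG F M : inst (With (enc R F) (TA R (Var 0))) M = With (enc R F) (TA R M).
Proof. by rewrite /inst /= subst_TA subst_closed ?closed_enc. Qed.
Lemma inst_enc_EG F M : inst (With (enc R F) (TE R (Var 0))) M = With (enc R F) (TE R M).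
Proof. by rewrite /inst /= subst_TE subst_closed ?closed_enc. Qed.
Lemma inst_enc_AU F G M : inst (Plus (enc R G) (With (enc R F) (TA R (Var 0)))) M =
  Plus (enc R G) (With (enc R F) (TA R M)).
Proof.
rewrite /inst subst_Plus subst_With subst_TA [subst_at _ _ (enc R G)]subst_closed ?closed_enc //.
by rewrite [subst_at _ _ (enc R F)]subst_closed ?closed_enc.
Qed.
Lemma inst_enc_EU F G M : inst (Plus (enc R G) (With (enc R F) (TE R (Var 0)))) M =
  Plus (enc R G) (With (enc R F) (TE R M)).
Proof.
rewrite /inst subst_Plus subst_With subst_TE [subst_at _ _ (enc R G)]subst_closed ?closed_enc //.
by rewrite [subst_at _ _ (enc R F)]subst_closed ?closed_enc.
Qed.

Lemma completeness F : forall s, sat R s F -> provable (enc R F :: ctx s).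
Proof.
elim: F => [p|F1 IH1 F2 IH2|F1 IH1 F2 IH2|F IH|F IH|F IH|F IH|F IH|F IH|F1 IH1 F2 IH2|F1 IH1 F2 IH2] s /=.
- exact: pos_sf_id.
- by move=> [h1 h2]; apply: pr_with; [exact: IH1 | exact: IH2].
- by move=> [h|h]; [apply: pr_plus_l; exact: IH1 | apply: pr_plus_r; exact: IH2].
- move=> h; apply: TA_step => v hv; apply: IH; exact: h.
- move=> [v [hv h]]; apply: TE_step hv _; exact: IH.
-
  move=> h.
  have [k hk] : exists k, W (fun _ => True) (sat R ^~ F) k s.
    apply: AU_bound => p hp; have [k hk] := h p hp; by exists k.
  elim: k s hk {h} => [|k IHk] s /= hk; apply: pr_mu; rewrite inst_enc_AF.
  + apply: pr_plus_l; exact: IH.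
  + case: hk => [hF|[_ hv]]; first by apply: pr_plus_l; exact: IH.
    apply: pr_plus_r; apply: TA_step => v hv'; exact: IHk (hv v hv').
-
  move=> [p [hp [k hk]]].
  elim: k s p hp hk => [|k IHk] s p hp hk; apply: pr_mu; rewrite inst_enc_EF.
  + apply: pr_plus_l; apply: IH; by case: hp => <-.
  + apply: pr_plus_r; apply: (TE_step (path_step hp)).
    exact: (IHk _ _ (path_shift hp)).
-
  move=> h.
  have [L hL] := list_of (fun t => sat R t (CAG F)).
  pose S := bigop_ne Plus Zero (map (@pos n) L).
  have cS : closed_at 0 S.
    apply: closed_big => [x y|//|] //; rewrite all_map; apply/allP => t _ /=; exact: closed_pos.
  have good_F : forall t, sat R t (CAG F) -> sat R t F.
    move=> t ht; have [p hp] := path_exists hser t.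
    have := ht p hp 0; by case: hp => ->.
  have good_succ : forall t v, sat R t (CAG F) -> (t, v) \in R -> sat R v (CAG F).
    move=> t v ht hv q hq k.
    exact: (ht _ (path_cons hv hq) k.+1).
  have S_id : forall t, sat R t (CAG F) -> provable (S :: ctx t).
    move=> t ht; apply: (plus_big (f := @pos n) (i := t)); first by apply/hL.
    exact: pos_id.
  apply: (pr_nu cS (S_id _ h)).
  rewrite dual_bigPlus -map_comp.
  have -> : [seq (dual \o @pos n) i | i <- L] = [seq enc_state t | t <- L].
    by apply: eq_map => t; rewrite /comp enc_state_dual.
  apply: with_big => t /hL ht.
  apply: par_big; apply: (pr_ex _ (_ : provable (inst (With (enc R F) (TA R (Var 0))) S :: ctx t))).
    have := perm_mid (inst (With (enc R F) (TA R (Var 0))) S) (ctx t) [::]; by rewrite cats0.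
  rewrite inst_enc_AG; apply: pr_with; first by apply: IH; exact: good_F.
  apply: TA_step => v hv; apply: S_id; exact: good_succ hv.
-
  move=> h.
  have [L hL] := list_of (fun t => sat R t (CEG F)).
  pose S := bigop_ne Plus Zero (map (@pos n) L).
  have cS : closed_at 0 S.
    apply: closed_big => [x y|//|] //; rewrite all_map; apply/allP => t _ /=; exact: closed_pos.
  have S_id : forall t, sat R t (CEG F) -> provable (S :: ctx t).
    move=> t ht; apply: (plus_big (f := @pos n) (i := t)); first by apply/hL.
    exact: pos_id.
  apply: (pr_nu cS (S_id _ h)).
  rewrite dual_bigPlus -map_comp.
  have -> : [seq (dual \o @pos n) i | i <- L] = [seq enc_state t | t <- L].
    by apply: eq_map => t; rewrite /comp enc_state_dual.
  apply: with_big => t /hL [p [hp hk]].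
  apply: par_big; apply: (pr_ex _ (_ : provable (inst (With (enc R F) (TE R (Var 0))) S :: ctx t))).
    have := perm_mid (inst (With (enc R F) (TE R (Var 0))) S) (ctx t) [::]; by rewrite cats0.
  rewrite inst_enc_EG; apply: pr_with.
    apply: IH; have := hk 0; by case: hp => ->.
  apply: (TE_step (path_step hp)); apply: S_id.
  exists (fun k => p k.+1); split; first exact: path_shift hp.
  by move=> k; apply: hk.
-
  move=> h.
  have [k hk] : exists k, W (sat R ^~ F1) (sat R ^~ F2) k s by apply: AU_bound.
  elim: k s hk {h} => [|k IHk] s /= hk; apply: pr_mu; rewrite inst_enc_AU.
  + apply: pr_plus_l; exact: IH2.
  + case: hk => [hG|[hF hv]]; first by apply: pr_plus_l; exact: IH2.
    apply: pr_plus_r; apply: pr_with; first exact: IH1.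
    apply: TA_step => v hv'; exact: IHk (hv v hv').
-
  move=> [p [hp [k [hk hj]]]].
  elim: k s p hp hk hj => [|k IHk] s p hp hk hj; apply: pr_mu; rewrite inst_enc_EU.
  + apply: pr_plus_l; apply: IH2; by case: hp => <-.
  + apply: pr_plus_r; apply: pr_with.
      apply: IH1; have := hj 0 isT; by case: hp => ->.
    apply: (TE_step (path_step hp)).
    apply: (IHk _ _ (path_shift hp)) => // j hjk; exact: hj.
Qed.

End Compl2.

Theorem theorem5 (n : nat) (R : seq (rule n)) (F : ctl n) (s : state n) :
  serial R ->
  (sat R s F <-> provable [:: enc_state s; enc R F]).
Proof.
move=> hser; split.
- move=> h; have := completeness hser h => hp.
  apply: par_big; apply: (pr_ex _ hp).
  have := perm_mid (enc R F) (ctx s) [::]; by rewrite cats0.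
- move=> hp.
  have hc : all (closed_at 0) [:: enc_state s; enc R F].
    by rewrite /= closed_enc_state closed_enc.
  have := soundness (@PAm n) (fun _ _ => False) hp hc.
  move/PS_cons0; rewrite /PS /= ParU_unitr enc_state_dual sem_dual_closed ?closed_pos // DD => h.
  apply: (adequacy hser (r := fun _ _ => False)); apply: h; exact: pos_w.
Qed.
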